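(* Fix $0<q<1$. For every $G\in\mathcal G$ with $G\ne E$, $$-\log\Big(\frac{q}{1-q}\|G-E\|\Big)\le T_q(G)\le\frac{1-q}{q}\cdot\frac{1}{\|G-E\|}.$$
   Context: $E(t)=1-e^{-t}$, $\bar E=1-E$, $\bar G=1-G$. $\mathcal G=\{E\#F:F$ a probability distribution on $[1,\infty)\}$ with $(E\#F)(t)=\int E(t/\mu)\,dF(\mu)$. $T_q(G)=\inf\{t:\bar G(t)\ge\frac1q\bar E(t)\}$. $\|G-G'\|=\sup_t|G(t)-G'(t)|$ is the Kolmogorov–Smirnov distance. *)

(* Defs.v *)
From HB Require Import structures.
From mathcomp Require Import all_boot all_order all_algebra.
From mathcomp Require Import all_classical all_reals all_analysis.
Set Implicit Arguments. Unset Strict Implicit. Unset Printing Implicit Defensive.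
Import Order.TTheory GRing.Theory Num.Theory.
Local Open Scope classical_set_scope.
Local Open Scope ring_scope.

Definition Eexp (R : realType) (t : R) : R := 1 - expR (- t).

Definition mixE (R : realType) (F : probability R R) (t : R) : R :=
  Rintegral F `[1, +oo[%classic (fun mu => Eexp (t / mu)).

Definition KS (R : realType) (G G' : R -> R) : R :=
  sup [set `|G t - G' t| | t in [set t : R | 0 <= t]].

Definition Tq (R : realType) (q : R) (G : R -> R) : R :=
  inf [set t : R | 0 <= t /\ (1 - G t >= q^-1 * (1 - Eexp t))].

(* Main.v *)
Require Import Defs.
From HB Require Import structures.
From mathcomp Require Import all_boot all_order all_algebra.
From mathcomp Require Import all_classical all_reals all_analysis.
Import Order.TTheory GRing.Theory Num.Theory.
Local Open Scope classical_set_scope.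
Local Open Scope ring_scope.
From mathcomp Require Import ring lra.
Section S.
Variable R : realType.
Let D : set R := `[1, +oo[%classic.

Lemma mD : measurable D.
Proof. exact: measurable_itv. Qed.

Lemma Dinv x : D x -> 0 < x^-1 <= 1.
Proof.
rewrite /D /= in_itv /= andbT => x1.
have x0 : 0 < x by apply: lt_le_trans x1.
by rewrite invr_gt0 x0 /= invf_le1.
Qed.


Lemma minv : measurable_fun D (GRing.inv : R -> R).
Proof.
have E : [set x : R | 0 < x] = `]0, +oo[%classic.
  by apply/seteqP; split => x; rewrite /= in_itv /= andbT.
apply: (@measurable_funS _ _ _ _ [set x : R | 0 < x]).
- rewrite E; exact: measurable_itv.
- move=> x /Dinv /andP[x0 _] /=.
  by rewrite -invr_gt0.
apply: measurable_realfun.open_continuous_measurable_fun.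
  exact: open_gt.
move=> x; rewrite inE /= => x0.
by apply: inv_continuous; rewrite gt_eqF.
Qed.

Lemma bnd_integ (F : probability R R) (f : R -> R) (M : R) :
  measurable_fun D f -> (forall x, D x -> `|f x| <= M) ->
  F.-integrable D (EFin \o f).
Proof.
move=> mf fM; apply: measurable_bounded_integrable => //.
- exact: mD.
- by apply: (le_lt_trans (probability_le1 F mD)); rewrite ltry.
exists M; split; first exact: num_real.
move=> y My x Dx; apply: le_trans (fM x Dx) _; exact: ltW.
Qed.

Lemma P2 (t x : R) : 0 < x <= 1 ->
  expR (- t) * (1 + t * (1 - x)) <= expR (- (t * x)).
Proof.
move=> _.
have -> : - (t * x) = - t + t * (1 - x) by ring.
rewrite expRD; apply: ler_wpM2l; first exact: expR_ge0.
exact: expR_ge1Dx.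
Qed.

Lemma P1 (t x : R) : 0 < x <= 1 ->
  expR (- (t * x)) <= expR (- t) + (1 - expR (- t)) * (1 - x).
Proof.
move=> /andP[x0 x1].
set u := expR (- (t * x)).
have hv := expR_ge1Dx (- t * (1 - x)).
have hw := expR_ge1Dx (t * x).
set v := expR (- t * (1 - x)) in hv.
set w := expR (t * x) in hw.
have E1 : expR (- t) = u * v by rewrite /u /v -expRD; congr expR; ring.
have E2 : u * w = 1 by rewrite /u /w -expRD addNr expR0.
have u0 : 0 < u by exact: expR_gt0.
have h1 : 0 <= u * x * (v - (1 + - t * (1 - x))).
  by apply: mulr_ge0; [apply: mulr_ge0; apply: ltW | rewrite subr_ge0].
have h2 : 0 <= u * (1 - x) * (w - (1 + t * x)).
  by apply: mulr_ge0; [apply: mulr_ge0; [apply: ltW | rewrite subr_ge0] | rewrite subr_ge0].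
rewrite E1; nra.
Qed.

Variable F : probability R R.
Hypothesis hF : F D = 1%E.

Lemma FD : fine (F D) = 1.
Proof. by rewrite hF. Qed.

Lemma integ_lin (c d : R) :
  F.-integrable D (EFin \o (fun mu => c + d * (1 - mu^-1))).
Proof.
apply: (@bnd_integ F _ (`|c| + `|d|)).
  apply: measurable_realfun.measurable_funD; first exact: measurable_cst.
  apply: measurable_realfun.measurable_funM; first exact: measurable_cst.
  apply: measurable_realfun.measurable_funB; first exact: measurable_cst.
  exact: minv.
move=> x /Dinv /andP[x0 x1].
apply: (le_trans (ler_normD _ _)); apply: lerD => //.
rewrite normrM -[X in _ <= X]mulr1; apply: ler_wpM2l => //.
rewrite ger0_norm ?subr_ge0 //; lra.
Qed.

Lemma integ_a (t : R) : F.-integrable D (EFin \o (fun mu => expR (- (t / mu)))).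
Proof.
apply: (@bnd_integ F _ (expR `|t|)).
  have -> : (fun mu => expR (- (t / mu))) = expR \o (fun mu => (- t) * mu^-1).
    by apply: funext => mu /=; rewrite mulNr.
  apply: measurableT_comp; first exact: measurable_realfun.measurable_expR.
  apply: measurable_realfun.measurable_funM; first exact: measurable_cst.
  exact: minv.
move=> x /Dinv /andP[x0 x1].
rewrite ger0_norm ?expR_ge0 // ler_expR.
apply: (le_trans (ler_norm _)); rewrite normrN normrM.
rewrite -[X in _ <= X]mulr1; apply: ler_wpM2l => //.
by rewrite ger0_norm // ltW.
Qed.

Lemma integ_c (c : R) : F.-integrable D (EFin \o (fun mu : R => c)).
Proof.
apply: (@bnd_integ F _ (`|c|)) => //; exact: measurable_cst.
Qed.

Definition A (t : R) := \int[F]_(mu in D) expR (- (t / mu)).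
Definition m := \int[F]_(mu in D) (1 - mu^-1).

Lemma integ_lin' (d : R) :
  F.-integrable D (EFin \o (fun mu => d * (1 - mu^-1))).
Proof.
apply: (eq_integrable mD _ _ _ (integ_lin 0 d)) => x _ /=.
by rewrite add0r.
Qed.

Lemma int_lin (c d : R) :
  \int[F]_(mu in D) (c + d * (1 - mu^-1)) = c + d * m.
Proof.
rewrite (RintegralD mD (integ_c c) (integ_lin' d)).
rewrite Rintegral_cst; last exact: mD.
rewrite FD mulr1 RintegralZl //; first exact: mD.
apply: (eq_integrable mD _ _ _ (integ_lin' 1)) => x _ /=.
by rewrite mul1r.
Qed.

Lemma mixA t : mixE F t = 1 - A t.
Proof.
rewrite /mixE /Eexp /A (RintegralB mD (integ_c 1) (integ_a t)).
by rewrite Rintegral_cst ?FD ?mulr1 //; exact: mD.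
Qed.

Lemma hup t : A t <= expR (- t) + (1 - expR (- t)) * m.
Proof.
rewrite -int_lin /A; apply: le_Rintegral; [exact: mD|exact: integ_a|exact: integ_lin|].
move=> x /Dinv hx; exact: P1.
Qed.

Lemma hlow t : expR (- t) * (1 + t * m) <= A t.
Proof.
have -> : expR (- t) * (1 + t * m) = expR (- t) + (expR (- t) * t) * m by ring.
rewrite -int_lin /A; apply: le_Rintegral; [exact: mD|exact: integ_lin|exact: integ_a|].
move=> x /Dinv hx; have := @P2 t x^-1 hx.
by have -> : expR (- t) * (1 + t * (1 - x^-1)) = expR (- t) + expR (- t) * t * (1 - x^-1) by ring.
Qed.

Lemma m_ge0 : 0 <= m.
Proof.
apply: Rintegral_ge0 => x /Dinv /andP[x0 x1]; lra.
Qed.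

End S.

Theorem lemma4p4 (R : realType) (q : R) (hq0 : 0 < q) (hq1 : q < 1)
  (F : probability R R) (hF : F `[1, +oo[%classic = 1%E)
  (hGE : mixE F <> @Eexp R) :
  - ln (q / (1 - q) * KS (mixE F) (@Eexp R)) <= Tq q (mixE F) /\
  Tq q (mixE F) <= (1 - q) / q * (KS (mixE F) (@Eexp R))^-1.
Proof.
have hup := @hup R F hF; have hlow := @hlow R F hF; have mixA := @mixA R F hF.
have m0 := @m_ge0 R F.
set m := @m R F in hup hlow m0.
set A := @A R F in hup hlow mixA.
have mpos : 0 < m.
  rewrite lt_def m0 andbT; apply/eqP => m00; apply: hGE; apply: funext => t.
  rewrite mixA /Eexp; congr (_ - _); apply/eqP; rewrite eq_le; apply/andP; split.
    by have := hup t; rewrite m00 mulr0 addr0.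
  by have := hlow t; rewrite m00 mulr0 addr0 mulr1.
have Aget t : 0 <= t -> expR (- t) <= A t.
  move=> t0; apply: le_trans (hlow t); rewrite -[X in X <= _]mulr1.
  apply: ler_wpM2l; first exact: expR_ge0.
  by rewrite lerDl mulr_ge0.
have KSe t : 0 <= t -> `|mixE F t - Eexp t| = A t - expR (- t).
  move=> t0; rewrite mixA /Eexp.
  have -> : 1 - A t - (1 - expR (- t)) = - (A t - expR (- t)) by ring.
  by rewrite normrN ger0_norm // subr_ge0 Aget.
set K := [set `|mixE F t - Eexp t| | t in [set t : R | 0 <= t]].
have hKS : KS (mixE F) (@Eexp R) = sup K by [].
have Kne : K !=set0 by exists `|mixE F 0 - Eexp 0|; exists 0; rewrite /= ?lexx.
have KSm : KS (mixE F) (@Eexp R) <= m.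
  rewrite hKS; apply: ge_sup => // _ [t t0 <-]; rewrite KSe //.
  have := hup t; have := expR_gt0 (- t); nra.
have KSge t : 0 <= t -> A t - expR (- t) <= KS (mixE F) (@Eexp R).
  move=> t0; rewrite hKS -KSe //; apply: sup_upper_bound; last by exists t.
  split => //; exists m => _ [s s0 <-]; rewrite KSe //.
  have := hup s; have := expR_gt0 (- s); nra.
set S := [set t : R | 0 <= t /\ (1 - mixE F t >= q^-1 * (1 - Eexp t))].
have hT : Tq q (mixE F) = inf S by [].
have Sin t : t \in S -> 0 <= t /\ q^-1 * expR (- t) <= A t.
  rewrite inE /S /= mixA /Eexp.
  have -> : 1 - (1 - A t) = A t by ring.
  have -> : 1 - (1 - expR (-t)) = expR (- t) by ring.
  exact: id.
have inS t : 0 <= t -> q^-1 * expR (- t) <= A t -> S t.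
  move=> t0 h; rewrite /S /= mixA /Eexp.
  have -> : 1 - (1 - A t) = A t by ring.
  have -> : 1 - (1 - expR (-t)) = expR (- t) by ring.
  by split.
have qi : q^-1 = 1 + (1 - q) / q.
  by rewrite mulrBl mul1r divff ?gt_eqF // addrC subrK.
have q1 : 0 < 1 - q by rewrite subr_gt0.
have r0 : 0 < (1 - q) / q by rewrite divr_gt0.
have crit t (k : R) : 0 <= t -> 0 <= k -> k <= m -> t * k = (1 - q) / q -> S t.
  move=> t0 k0 km tk; apply: inS => //.
  apply: le_trans (hlow t); rewrite mulrC; apply: ler_wpM2l; first exact: expR_ge0.
  rewrite qi -tk lerD2l; exact: ler_wpM2l.
have S0 : S ((1 - q) / q * m^-1).
  apply: (crit _ m) => //; first by rewrite mulr_ge0 // ?invr_ge0 ltW.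
  by rewrite divfK // gt_eqF.
have Sne : S !=set0 by eexists; exact: S0.
have Sbd t : S t -> (1 - q) / q * expR (- t) <= KS (mixE F) (@Eexp R).
  move=> St; have [t0 h] : 0 <= t /\ q^-1 * expR (- t) <= A t.
    by apply: Sin; rewrite inE.
  apply: le_trans (KSge t t0); rewrite qi mulrDl mul1r in h.
  by rewrite lerBrDl.
have KSpos : 0 < KS (mixE F) (@Eexp R).
  apply: lt_le_trans (Sbd _ S0); apply: mulr_gt0 => //; exact: expR_gt0.
split.
  rewrite hT; apply: lb_le_inf => // t St.
  have h := Sbd t St.
  have e : expR (- t) <= q / (1 - q) * KS (mixE F) (@Eexp R).
    rewrite -(ler_pM2l r0) mulrA.
    have -> : (1 - q) / q * (q / (1 - q)) = 1.
      by rewrite mulrA divfK ?gt_eqF // divff // gt_eqF.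
    by rewrite mul1r.
  rewrite -ler_ln ?posrE ?expR_gt0 // in e; last first.
    by rewrite mulr_gt0 // divr_gt0.
  by rewrite expRK in e; rewrite lerNl.
rewrite hT; apply: ge_inf; first by exists 0 => t [].
apply: (crit _ (KS (mixE F) (@Eexp R))) => //.
- by rewrite mulr_ge0 // ?invr_ge0 ltW.
- exact: ltW.
- by rewrite divfK // gt_eqF.
Qed.
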